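(* Let $K$ be any one of the prime knots $6_3$, $8_7$, $8_8$, $8_{10}$, $8_{16}$ (Rolfsen knot table notation). Then the knot quandle $Q(K)$ is not bi-orderable.
   Context: A quandle is a non-empty set $Q$ with a binary operation $*$ such that: (Q1) $x*x=x$ for all $x\in Q$; (Q2) for each $x,y\in Q$ there is a unique $z\in Q$ with $x=z*y$ (write $z=x*^{-1}y$); (Q3) $(x*y)*z=(x*z)*(y*z)$ for all $x,y,z\in Q$. The knot quandle $Q(K)$ of an oriented knot $K$ (Joyce, Matveev) is the quandle presented as follows: fix an oriented diagram $D$ of $K$; generators are the arcs of $D$; at each crossing with over-arc $y$, incoming under-arc $x$ and outgoing under-arc $z$, impose the relation $z=x*y$ if the crossing is positive and $z=x*^{-1}y$ if it is negative. A quandle $Q$ is bi-orderable if there is a strict linear order $<$ on $Q$ such that for all $x,y,z\in Q$, $x<y$ implies both $z*x<z*y$ (left-orderability) and $x*z<y*z$ (right-orderability). *)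

(* Defs.v *)
From Stdlib Require Import List FunctionalExtensionality PropExtensionality.
From mathcomp Require Import all_boot.
Set Implicit Arguments.
Unset Strict Implicit.
Unset Printing Implicit Defensive.

Definition strict_linear_order (Q : Type) (lt : Q -> Q -> Prop) : Prop :=
  (forall x, ~ lt x x) /\
  (forall x y z, lt x y -> lt y z -> lt x z) /\
  (forall x y, x <> y -> lt x y \/ lt y x).

Definition bi_orderable (Q : Type) (op : Q -> Q -> Q) : Prop :=
  exists lt : Q -> Q -> Prop,
    strict_linear_order lt /\
    (forall x y z, lt x y -> lt (op z x) (op z y)) /\
    (forall x y z, lt x y -> lt (op x z) (op y z)).

(* A relation (x, y, z, s) means  z = x * y  if s = true (positive      *)
(* crossing) and  z = x *^-1 y  if s = false (negative crossing).       *)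

Inductive qterm (A : Type) : Type :=
| qgen : A -> qterm A
| qop  : qterm A -> qterm A -> qterm A
| qinv : qterm A -> qterm A -> qterm A.

Arguments qgen {A}.
Arguments qop {A}.
Arguments qinv {A}.

Inductive qeq (A : Type) (R : list (A * A * A * bool)) : qterm A -> qterm A -> Prop :=
| qe_refl t : qeq R t t
| qe_sym t u : qeq R t u -> qeq R u t
| qe_trans t u v : qeq R t u -> qeq R u v -> qeq R t v
| qe_op t t' u u' : qeq R t t' -> qeq R u u' -> qeq R (qop t u) (qop t' u')
| qe_inv t t' u u' : qeq R t t' -> qeq R u u' -> qeq R (qinv t u) (qinv t' u')
| qe_idem x : qeq R (qop x x) x
| qe_invr x y : qeq R (qop (qinv x y) y) x
| qe_invl x y : qeq R (qinv (qop x y) y) x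
| qe_dist x y z : qeq R (qop (qop x y) z) (qop (qop x z) (qop y z))
| qe_rel x y z (s : bool) : In (x, y, z, s) R ->
    qeq R (qgen z) (if s then qop (qgen x) (qgen y) else qinv (qgen x) (qgen y)).

Definition pquandle (A : Type) (R : list (A * A * A * bool)) : Type :=
  { P : qterm A -> Prop | exists t, P = qeq R t }.

Definition pq_class (A : Type) (R : list (A * A * A * bool)) (t : qterm A)
  : pquandle R := exist _ (qeq R t) (ex_intro _ t erefl).

Lemma qeq_class_eq (A : Type) (R : list (A * A * A * bool)) (t u : qterm A) :
  qeq R t u -> qeq R t = qeq R u.
Proof.
move=> H; apply: functional_extensionality => s.
apply: propositional_extensionality; split => Hs.
- exact: qe_trans (qe_sym H) Hs.
- exact: qe_trans H Hs.
Qed.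

Lemma pq_op_spec (A : Type) (R : list (A * A * A * bool)) (P Q : pquandle R) :
  exists t, (fun s => exists a b, proj1_sig P a /\ proj1_sig Q b /\ qeq R (qop a b) s)
            = qeq R t.
Proof.
case: P => P HP; case: Q => Q HQ /=.
case: HP => a0 HP; case: HQ => b0 HQ.
exists (qop a0 b0); apply: functional_extensionality => s.
apply: propositional_extensionality; split.
- move=> [a [b [Ha [Hb Hs]]]].
  rewrite HP in Ha; rewrite HQ in Hb.
  exact: qe_trans (qe_op Ha Hb) Hs.
- move=> Hs; exists a0, b0; rewrite HP HQ.
  split; [exact: qe_refl | split; [exact: qe_refl | exact: Hs]].
Qed.

Definition pq_op (A : Type) (R : list (A * A * A * bool)) (P Q : pquandle R)
  : pquandle R :=
  exist _ (fun s => exists a b, proj1_sig P a /\ proj1_sig Q b /\ qeq R (qop a b) s)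
          (pq_op_spec P Q).

(* Arcs are 'I_narcs; a crossing (x, y, z, s) has incoming under-arc x, *)
(* over-arc y, outgoing under-arc z and sign s (true = positive).       *)

Record diagram := Diagram {
  narcs : nat;
  crossings : list ('I_narcs * 'I_narcs * 'I_narcs * bool) }.

Definition knot_quandle (D : diagram) : Type := pquandle (crossings D).
Definition knot_quandle_op (D : diagram) : knot_quandle D -> knot_quandle D -> knot_quandle D :=
  @pq_op _ (crossings D).

(* mirror image: reflect the diagram in a line of the plane; arcs are
   unchanged and every crossing changes sign. *)
Definition mirror (D : diagram) : diagram :=
  @Diagram (narcs D) (map (fun c => match c with (x, y, z, s) => (x, y, z, ~~ s) end)
                          (crossings D)).

Definition mkc (m : nat) (x y z : nat) (s : bool) : 'I_m.+1 * 'I_m.+1 * 'I_m.+1 * bool :=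
  (inord x, inord y, inord z, s).

(* Alternating diagrams obtained from the Dowker-Thistlethwaite codes
   6_3: 4 8 10 2 12 6          8_7: 4 10 12 14 2 16 6 8
   8_8: 4 8 12 2 16 14 6 10    8_10: 4 8 12 2 14 16 6 10
   8_16: 6 8 14 12 4 16 2 10
   (checked: Alexander polynomials 1-3t+5t^2-3t^3+t^4, 1-3t+5t^2-5t^3+5t^4-3t^5+t^6,
    2-6t+9t^2-6t^3+2t^4, 1-3t+6t^2-7t^3+6t^4-3t^5+t^6, 1-4t+8t^2-9t^3+8t^4-4t^5+t^6). *)

Definition knot_6_3 : diagram := @Diagram 6
  [:: mkc 5 5 1 0 false; mkc 5 0 3 1 false; mkc 5 1 4 2 true;
      mkc 5 2 0 3 false; mkc 5 3 5 4 true;  mkc 5 4 2 5 true].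

Definition knot_8_7 : diagram := @Diagram 8
  [:: mkc 7 7 1 0 false; mkc 7 0 4 1 false; mkc 7 1 5 2 true; mkc 7 2 6 3 true;
      mkc 7 3 0 4 false; mkc 7 4 7 5 true;  mkc 7 5 2 6 true; mkc 7 6 3 7 true].

Definition knot_8_8 : diagram := @Diagram 8
  [:: mkc 7 7 1 0 false; mkc 7 0 3 1 false; mkc 7 1 5 2 true; mkc 7 2 0 3 false;
      mkc 7 3 7 4 true;  mkc 7 4 6 5 true;  mkc 7 5 2 6 true; mkc 7 6 4 7 true].

Definition knot_8_10 : diagram := @Diagram 8
  [:: mkc 7 7 1 0 false; mkc 7 0 3 1 false; mkc 7 1 5 2 true; mkc 7 2 0 3 false;
      mkc 7 3 6 4 true;  mkc 7 4 7 5 true;  mkc 7 5 2 6 true; mkc 7 6 4 7 true].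

Definition knot_8_16 : diagram := @Diagram 8
  [:: mkc 7 7 2 0 false; mkc 7 0 3 1 true;  mkc 7 1 6 2 false; mkc 7 2 5 3 true;
      mkc 7 3 1 4 true;  mkc 7 4 7 5 true;  mkc 7 5 0 6 false; mkc 7 6 4 7 true].

Definition the_knots : list diagram :=
  [:: knot_6_3; knot_8_7; knot_8_8; knot_8_10; knot_8_16].

(* Main.v *)
Require Import Defs.
From Stdlib Require Import List.
From Stdlib Require Import List Lia ClassicalEpsilon ProofIrrelevance FunctionalExtensionality PropExtensionality.
From mathcomp Require Import all_boot all_algebra.
From mathcomp Require Import ring zify.

Inductive S3 (a b c d : nat) : Prop :=
| S3lt : a < b -> c < d -> S3 a b c d
| S3eq : a = b -> c = d -> S3 a b c d
| S3gt : b < a -> d < c -> S3 a b c d.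

Lemma count_lt_sub (T : eqType) (a b : pred T) (s : seq T) (x : T) :
  (forall y, a y -> b y) -> x \in s -> b x -> ~~ a x -> (count a s < count b s)%N.
Proof.
move=> Hab; elim: s => [|y s IH] //= Hx Hb Ha.
have Hsub : (count a s <= count b s)%N by apply: sub_count.
rewrite in_cons in Hx; case/orP: Hx => [/eqP Exy|Hx].
- subst y; move: Ha Hb; case: (a x); case: (b x) => //=; try lia.
- have := IH Hx Hb Ha; have := Hab y; case: (a y); case: (b y) => //=; try lia.
Qed.

Section Rank.
Variables (Q : Type) (op : Q -> Q -> Q) (lt : Q -> Q -> Prop).
Hypothesis Hslo : strict_linear_order lt.
Hypothesis HL : forall x y z, lt x y -> lt (op z x) (op z y).
Hypothesis HR : forall x y z, lt x y -> lt (op x z) (op y z).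
Variables (g : nat -> Q) (n : nat).

Definition ltb (x y : Q) : bool := if excluded_middle_informative (lt x y) then true else false.
Lemma ltbP x y : ltb x y <-> lt x y.
Proof. rewrite /ltb; case: excluded_middle_informative => //. Qed.

Definition rk (i : nat) : nat := count (fun k => ltb (g k) (g i)) (iota 0 n).

Lemma rk_lt i j : (i < n)%N -> lt (g i) (g j) -> rk i < rk j.
Proof.
move=> Hi Hij; case: Hslo => Hirr [Htr _].
apply: (@count_lt_sub _ _ _ _ i).
- move=> k /ltbP Hk; apply/ltbP; exact: Htr Hk Hij.
- by rewrite mem_iota.
- by apply/ltbP.
- by apply/negP => /ltbP /Hirr.
Qed.

Lemma rk_eq i j : g i = g j -> rk i = rk j.
Proof. by rewrite /rk => ->. Qed.

Lemma tri i j : (i < n)%N -> (j < n)%N ->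
  (lt (g i) (g j) /\ rk i < rk j) \/ (g i = g j /\ rk i = rk j) \/ (lt (g j) (g i) /\ rk j < rk i).
Proof.
move=> Hi Hj; case: Hslo => _ [_ Htot].
case: (classic (g i = g j)) => E.
- by right; left; split => //; apply: rk_eq.
- case: (Htot _ _ E) => H; [left|right; right]; split => //; exact: rk_lt.
Qed.

Lemma S3_right u1 u2 y v1 v2 : (u1 < n)%N -> (u2 < n)%N -> (v1 < n)%N -> (v2 < n)%N ->
  op (g u1) (g y) = g v1 -> op (g u2) (g y) = g v2 -> S3 (rk u1) (rk u2) (rk v1) (rk v2).
Proof.
move=> H1 H2 H3 H4 E1 E2.
case: (@tri u1 u2 H1 H2) => [[L R]|[[L R]|[L R]]].
- apply: S3lt => //; apply: rk_lt => //; rewrite -E1 -E2; exact: HR.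
- apply: S3eq => //; apply: rk_eq; by rewrite -E1 -E2 L.
- apply: S3gt => //; apply: rk_lt => //; rewrite -E1 -E2; exact: HR.
Qed.

Lemma S3_left u y1 y2 v1 v2 : (y1 < n)%N -> (y2 < n)%N -> (v1 < n)%N -> (v2 < n)%N ->
  op (g u) (g y1) = g v1 -> op (g u) (g y2) = g v2 -> S3 (rk y1) (rk y2) (rk v1) (rk v2).
Proof.
move=> H1 H2 H3 H4 E1 E2.
case: (@tri y1 y2 H1 H2) => [[L R]|[[L R]|[L R]]].
- apply: S3lt => //; apply: rk_lt => //; rewrite -E1 -E2; exact: HL.
- apply: S3eq => //; apply: rk_eq; by rewrite -E1 -E2 L.
- apply: S3gt => //; apply: rk_lt => //; rewrite -E1 -E2; exact: HL.
Qed.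

Lemma rk_neq i j : g i <> g j -> (i < n)%N -> (j < n)%N -> rk i <> rk j.
Proof.
move=> N Hi Hj E; case: (@tri i j Hi Hj) => [[_ L]|[[L _]|[_ L]]]; [lia|exact: N L|lia].
Qed.
End Rank.

Section PQ.
Variables (A : Type) (R : list (A * A * A * bool)).

Lemma pq_ext (P P' : pquandle R) : proj1_sig P = proj1_sig P' -> P = P'.
Proof.
case: P => P HP; case: P' => P' HP' /= E; subst P'.
by rewrite (proof_irrelevance _ HP HP').
Qed.

Lemma pq_class_eq t u : qeq R t u -> pq_class R t = pq_class R u.
Proof. move=> H; apply: pq_ext => /=; exact: qeq_class_eq. Qed.

Lemma pq_class_op a b : pq_op (pq_class R a) (pq_class R b) = pq_class R (qop a b).
Proof.
apply: pq_ext => /=; apply: functional_extensionality => s.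
apply: propositional_extensionality; split.
- move=> [a' [b' [Ha [Hb Hs]]]]; exact: qe_trans (qe_op Ha Hb) Hs.
- move=> Hs; exists a, b; split; [exact: qe_refl|split; [exact: qe_refl|exact: Hs]].
Qed.

Definition cls (x : A) := pq_class R (qgen x).

Lemma cls_idem x : pq_op (cls x) (cls x) = cls x.
Proof. rewrite /cls pq_class_op; apply: pq_class_eq; exact: qe_idem. Qed.

Lemma cls_pos x y z : In (x, y, z, true) R -> pq_op (cls x) (cls y) = cls z.
Proof. move=> H; rewrite /cls pq_class_op; apply: pq_class_eq; apply: qe_sym; exact: (qe_rel H). Qed.

Lemma cls_neg x y z : In (x, y, z, false) R -> pq_op (cls z) (cls y) = cls x.
Proof.
move=> H; rewrite /cls pq_class_op; apply: pq_class_eq.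
apply: (qe_trans _ (qe_invr R (qgen x) (qgen y))).
apply: qe_op; [exact: (qe_rel H)|exact: qe_refl].
Qed.

(* colorings by a dihedral quandle *)
Local Open Scope ring_scope.
Variables (K : comNzRingType) (col : A -> K).
Fixpoint ev (t : qterm A) : K :=
  match t with
  | qgen a => col a
  | qop u v => ev v *+ 2 - ev u
  | qinv u v => ev v *+ 2 - ev u
  end.
Hypothesis Hcol : forall x y z s, In (x, y, z, s) R -> col z = col y *+ 2 - col x.
Lemma ev_qeq t u : qeq R t u -> ev t = ev u.
Proof.
elim => {t u} /=; try (intros; congruence); try (intros; ring).
move=> x y z s H; rewrite (@Hcol x y z s H); by case: s H.
Qed.
Lemma cls_neq x y : col x <> col y -> cls x <> cls y.
Proof.
move=> N E; apply: N.
have : proj1_sig (cls x) (qgen x) by apply: qe_refl.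
by rewrite E /= => /ev_qeq /= ->.
Qed.
End PQ.

Lemma cross_mirror (D : diagram) x y z s :
  In (x, y, z, s) (crossings D) -> In (x, y, z, ~~ s) (crossings (mirror D)).
Proof.
move=> H; rewrite /mirror /=.
exact: (List.in_map (fun c => match c with (x, y, z, s) => (x, y, z, ~~ s) end) _ _ H).
Qed.

Lemma Hcol_mirror (D : diagram) (K : comNzRingType) (col : 'I_(narcs D) -> K) :
  (forall x y z s, In (x, y, z, s) (crossings D) -> col z = (col y *+ 2 - col x)%R) ->
  (forall x y z s, In (x, y, z, s) (crossings (mirror D)) -> col z = (col y *+ 2 - col x)%R).
Proof.
move=> H x y z s; rewrite /mirror /= => /in_map_iff [[[[x' y'] z'] s'] [E Hin]].
case: E => ? ? ? _; subst; exact: H Hin.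
Qed.

Ltac findL := cbv [crossings knot_6_3 knot_8_7 knot_8_8 knot_8_10 knot_8_16 In];
  repeat (first [left; reflexivity | right]).
Ltac findIn := first [ solve [findL]
  | apply: (@cross_mirror _ _ _ _ true); solve [findL]
  | apply: (@cross_mirror _ _ _ _ false); solve [findL] ].
Ltac solveE := match goal with g := _ |- _ => unfold g end; cbv beta;
  first [ apply: cls_idem | apply: cls_pos; findIn | apply: cls_neg; findIn ].
Definition colseq (n p : nat) (l : seq nat) (i : 'I_n) : 'Z_p := ((nth 0 l i)%:R)%R.
Definition col_6_3 := colseq 6 13 [:: 0; 1; 6; 7; 10; 2].
Definition col_8_7 := colseq 8 23 [:: 0; 1; 6; 11; 12; 15; 20; 2].
Definition col_8_8 := colseq 8 5 [:: 0; 1; 2; 3; 1; 4; 0; 2].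
Definition col_8_10 := colseq 8 3 [:: 0; 1; 1; 2; 0; 1; 1; 2].
Definition col_8_16 := colseq 8 5 [:: 0; 1; 3; 3; 4; 3; 2; 1].
Ltac colsimp := cbv [col_6_3 col_8_7 col_8_8 col_8_10 col_8_16]; rewrite /colseq ?inordK //.
Ltac solve_col := let x := fresh "x" in let y := fresh "y" in let z := fresh "z" in
  let s := fresh "s" in let H := fresh "H" in
  intros x y z s H; cbv [crossings knot_6_3 knot_8_7 knot_8_8 knot_8_10 knot_8_16 In mkc] in H;
  repeat (destruct H as [H|H]; [injection H; intros; subst; colsimp; apply/eqP; vm_compute; reflexivity|]);
  destruct H.
Ltac go := first [ exfalso; lia | let H := fresh in intro H; destruct H; go ].

Local Open Scope ring_scope.

Lemma Hcol_6_3 : forall x y z s, In (x, y, z, s) (crossings knot_6_3) -> col_6_3 z = col_6_3 y *+ 2 - col_6_3 x.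
Proof. solve_col. Qed.

Lemma nbo_6_3_0 : ~ bi_orderable (@knot_quandle_op knot_6_3).
Proof.
move=> [lt [Hslo [HL HR]]].
pose g := fun i : nat => cls _ (crossings knot_6_3) (inord i : 'I_6).
have N01 : g 0 <> g 1.
{ apply: (@cls_neq _ _ _ col_6_3); [exact: Hcol_6_3 | colsimp; by apply/eqP; vm_compute]. }
have R01 := @rk_neq _ lt Hslo g 6 0 1 N01 isT isT.
have C0 := @S3_left _ _ lt Hslo HL g 6 1 3 4 0 2 isT isT isT isT ltac:(solveE) ltac:(solveE).
have C1 := @S3_right _ _ lt Hslo HR g 6 1 4 4 2 4 isT isT isT isT ltac:(solveE) ltac:(solveE).
have C2 := @S3_right _ _ lt Hslo HR g 6 3 0 0 2 0 isT isT isT isT ltac:(solveE) ltac:(solveE).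
have C3 := @S3_left _ _ lt Hslo HL g 6 3 0 3 2 3 isT isT isT isT ltac:(solveE) ltac:(solveE).
have C4 := @S3_left _ _ lt Hslo HL g 6 3 5 3 4 3 isT isT isT isT ltac:(solveE) ltac:(solveE).
have C5 := @S3_right _ _ lt Hslo HR g 6 3 5 5 4 5 isT isT isT isT ltac:(solveE) ltac:(solveE).
have C6 := @S3_left _ _ lt Hslo HL g 6 4 2 4 5 4 isT isT isT isT ltac:(solveE) ltac:(solveE).
move: (rk _ lt g 6) R01 C0 C1 C2 C3 C4 C5 C6 => r R01.
go.
Qed.

Lemma nbo_6_3_1 : ~ bi_orderable (@knot_quandle_op (mirror knot_6_3)).
Proof.
move=> [lt [Hslo [HL HR]]].
pose g := fun i : nat => cls _ (crossings (mirror knot_6_3)) (inord i : 'I_6).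
have N01 : g 0 <> g 1.
{ apply: (@cls_neq _ _ _ col_6_3); [apply: (@Hcol_mirror knot_6_3); exact: Hcol_6_3 | colsimp; by apply/eqP; vm_compute]. }
have R01 := @rk_neq _ lt Hslo g 6 0 1 N01 isT isT.
have C0 := @S3_right _ _ lt Hslo HR g 6 0 3 3 1 3 isT isT isT isT ltac:(solveE) ltac:(solveE).
have C1 := @S3_right _ _ lt Hslo HR g 6 2 4 4 1 4 isT isT isT isT ltac:(solveE) ltac:(solveE).
have C2 := @S3_right _ _ lt Hslo HR g 6 2 0 0 3 0 isT isT isT isT ltac:(solveE) ltac:(solveE).
have C3 := @S3_left _ _ lt Hslo HL g 6 2 0 2 3 2 isT isT isT isT ltac:(solveE) ltac:(solveE).
have C4 := @S3_left _ _ lt Hslo HL g 6 4 5 4 3 4 isT isT isT isT ltac:(solveE) ltac:(solveE).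
have C5 := @S3_right _ _ lt Hslo HR g 6 5 2 2 4 2 isT isT isT isT ltac:(solveE) ltac:(solveE).
have C6 := @S3_left _ _ lt Hslo HL g 6 5 2 5 4 5 isT isT isT isT ltac:(solveE) ltac:(solveE).
move: (rk _ lt g 6) R01 C0 C1 C2 C3 C4 C5 C6 => r R01.
go.
Qed.


Lemma Hcol_8_7 : forall x y z s, In (x, y, z, s) (crossings knot_8_7) -> col_8_7 z = col_8_7 y *+ 2 - col_8_7 x.
Proof. solve_col. Qed.

Lemma nbo_8_7_0 : ~ bi_orderable (@knot_quandle_op knot_8_7).
Proof.
move=> [lt [Hslo [HL HR]]].
pose g := fun i : nat => cls _ (crossings knot_8_7) (inord i : 'I_8).
have N01 : g 0 <> g 1.
{ apply: (@cls_neq _ _ _ col_8_7); [exact: Hcol_8_7 | colsimp; by apply/eqP; vm_compute]. }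
have R01 := @rk_neq _ lt Hslo g 8 0 1 N01 isT isT.
have C0 := @S3_left _ _ lt Hslo HL g 8 0 1 0 7 0 isT isT isT isT ltac:(solveE) ltac:(solveE).
have C1 := @S3_left _ _ lt Hslo HL g 8 1 4 1 0 1 isT isT isT isT ltac:(solveE) ltac:(solveE).
have C2 := @S3_right _ _ lt Hslo HR g 8 1 5 5 2 5 isT isT isT isT ltac:(solveE) ltac:(solveE).
have C3 := @S3_right _ _ lt Hslo HR g 8 2 6 6 3 6 isT isT isT isT ltac:(solveE) ltac:(solveE).
have C4 := @S3_right _ _ lt Hslo HR g 8 4 0 0 3 0 isT isT isT isT ltac:(solveE) ltac:(solveE).
have C5 := @S3_left _ _ lt Hslo HL g 8 4 0 4 3 4 isT isT isT isT ltac:(solveE) ltac:(solveE).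
have C6 := @S3_left _ _ lt Hslo HL g 8 4 7 4 5 4 isT isT isT isT ltac:(solveE) ltac:(solveE).
have C7 := @S3_right _ _ lt Hslo HR g 8 4 7 7 5 7 isT isT isT isT ltac:(solveE) ltac:(solveE).
have C8 := @S3_right _ _ lt Hslo HR g 8 5 2 2 6 2 isT isT isT isT ltac:(solveE) ltac:(solveE).
have C9 := @S3_left _ _ lt Hslo HL g 8 5 2 5 6 5 isT isT isT isT ltac:(solveE) ltac:(solveE).
have C10 := @S3_right _ _ lt Hslo HR g 8 6 3 3 7 3 isT isT isT isT ltac:(solveE) ltac:(solveE).
have C11 := @S3_left _ _ lt Hslo HL g 8 6 3 6 7 6 isT isT isT isT ltac:(solveE) ltac:(solveE).
move: (rk _ lt g 8) R01 C0 C1 C2 C3 C4 C5 C6 C7 C8 C9 C10 C11 => r R01.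
go.
Qed.

Lemma nbo_8_7_1 : ~ bi_orderable (@knot_quandle_op (mirror knot_8_7)).
Proof.
move=> [lt [Hslo [HL HR]]].
pose g := fun i : nat => cls _ (crossings (mirror knot_8_7)) (inord i : 'I_8).
have N01 : g 0 <> g 1.
{ apply: (@cls_neq _ _ _ col_8_7); [apply: (@Hcol_mirror knot_8_7); exact: Hcol_8_7 | colsimp; by apply/eqP; vm_compute]. }
have R01 := @rk_neq _ lt Hslo g 8 0 1 N01 isT isT.
have C0 := @S3_right _ _ lt Hslo HR g 8 0 4 4 1 4 isT isT isT isT ltac:(solveE) ltac:(solveE).
have C1 := @S3_right _ _ lt Hslo HR g 8 2 5 5 1 5 isT isT isT isT ltac:(solveE) ltac:(solveE).
have C2 := @S3_left _ _ lt Hslo HL g 8 3 6 3 2 3 isT isT isT isT ltac:(solveE) ltac:(solveE).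
have C3 := @S3_right _ _ lt Hslo HR g 8 3 6 6 2 6 isT isT isT isT ltac:(solveE) ltac:(solveE).
have C4 := @S3_right _ _ lt Hslo HR g 8 3 0 0 4 0 isT isT isT isT ltac:(solveE) ltac:(solveE).
have C5 := @S3_left _ _ lt Hslo HL g 8 3 0 3 4 3 isT isT isT isT ltac:(solveE) ltac:(solveE).
have C6 := @S3_left _ _ lt Hslo HL g 8 5 7 5 4 5 isT isT isT isT ltac:(solveE) ltac:(solveE).
have C7 := @S3_right _ _ lt Hslo HR g 8 6 2 2 5 2 isT isT isT isT ltac:(solveE) ltac:(solveE).
have C8 := @S3_left _ _ lt Hslo HL g 8 6 2 6 5 6 isT isT isT isT ltac:(solveE) ltac:(solveE).
have C9 := @S3_right _ _ lt Hslo HR g 8 7 3 3 6 3 isT isT isT isT ltac:(solveE) ltac:(solveE).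
have C10 := @S3_left _ _ lt Hslo HL g 8 7 3 7 6 7 isT isT isT isT ltac:(solveE) ltac:(solveE).
move: (rk _ lt g 8) R01 C0 C1 C2 C3 C4 C5 C6 C7 C8 C9 C10 => r R01.
go.
Qed.


Lemma Hcol_8_8 : forall x y z s, In (x, y, z, s) (crossings knot_8_8) -> col_8_8 z = col_8_8 y *+ 2 - col_8_8 x.
Proof. solve_col. Qed.

Lemma nbo_8_8_0 : ~ bi_orderable (@knot_quandle_op knot_8_8).
Proof.
move=> [lt [Hslo [HL HR]]].
pose g := fun i : nat => cls _ (crossings knot_8_8) (inord i : 'I_8).
have N01 : g 0 <> g 1.
{ apply: (@cls_neq _ _ _ col_8_8); [exact: Hcol_8_8 | colsimp; by apply/eqP; vm_compute]. }
have R01 := @rk_neq _ lt Hslo g 8 0 1 N01 isT isT.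
have C0 := @S3_left _ _ lt Hslo HL g 8 1 3 5 0 2 isT isT isT isT ltac:(solveE) ltac:(solveE).
have C1 := @S3_right _ _ lt Hslo HR g 8 1 5 5 2 5 isT isT isT isT ltac:(solveE) ltac:(solveE).
have C2 := @S3_right _ _ lt Hslo HR g 8 3 0 0 2 0 isT isT isT isT ltac:(solveE) ltac:(solveE).
have C3 := @S3_left _ _ lt Hslo HL g 8 3 0 3 2 3 isT isT isT isT ltac:(solveE) ltac:(solveE).
have C4 := @S3_left _ _ lt Hslo HL g 8 3 7 3 4 3 isT isT isT isT ltac:(solveE) ltac:(solveE).
have C5 := @S3_right _ _ lt Hslo HR g 8 3 7 7 4 7 isT isT isT isT ltac:(solveE) ltac:(solveE).
have C6 := @S3_left _ _ lt Hslo HL g 8 4 6 4 5 4 isT isT isT isT ltac:(solveE) ltac:(solveE).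
have C7 := @S3_right _ _ lt Hslo HR g 8 4 6 6 5 6 isT isT isT isT ltac:(solveE) ltac:(solveE).
have C8 := @S3_left _ _ lt Hslo HL g 8 5 2 5 6 5 isT isT isT isT ltac:(solveE) ltac:(solveE).
have C9 := @S3_right _ _ lt Hslo HR g 8 6 4 4 7 4 isT isT isT isT ltac:(solveE) ltac:(solveE).
move: (rk _ lt g 8) R01 C0 C1 C2 C3 C4 C5 C6 C7 C8 C9 => r R01.
go.
Qed.

Lemma nbo_8_8_1 : ~ bi_orderable (@knot_quandle_op (mirror knot_8_8)).
Proof.
move=> [lt [Hslo [HL HR]]].
pose g := fun i : nat => cls _ (crossings (mirror knot_8_8)) (inord i : 'I_8).
have N01 : g 0 <> g 1.
{ apply: (@cls_neq _ _ _ col_8_8); [apply: (@Hcol_mirror knot_8_8); exact: Hcol_8_8 | colsimp; by apply/eqP; vm_compute]. }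
have R01 := @rk_neq _ lt Hslo g 8 0 1 N01 isT isT.
have C0 := @S3_right _ _ lt Hslo HR g 8 0 3 3 1 3 isT isT isT isT ltac:(solveE) ltac:(solveE).
have C1 := @S3_right _ _ lt Hslo HR g 8 2 5 5 1 5 isT isT isT isT ltac:(solveE) ltac:(solveE).
have C2 := @S3_right _ _ lt Hslo HR g 8 2 0 0 3 0 isT isT isT isT ltac:(solveE) ltac:(solveE).
have C3 := @S3_left _ _ lt Hslo HL g 8 2 0 2 3 2 isT isT isT isT ltac:(solveE) ltac:(solveE).
have C4 := @S3_left _ _ lt Hslo HL g 8 4 7 4 3 4 isT isT isT isT ltac:(solveE) ltac:(solveE).
have C5 := @S3_left _ _ lt Hslo HL g 8 5 6 5 4 5 isT isT isT isT ltac:(solveE) ltac:(solveE).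
have C6 := @S3_right _ _ lt Hslo HR g 8 5 6 6 4 6 isT isT isT isT ltac:(solveE) ltac:(solveE).
have C7 := @S3_right _ _ lt Hslo HR g 8 6 2 2 5 2 isT isT isT isT ltac:(solveE) ltac:(solveE).
have C8 := @S3_left _ _ lt Hslo HL g 8 6 2 6 5 6 isT isT isT isT ltac:(solveE) ltac:(solveE).
have C9 := @S3_right _ _ lt Hslo HR g 8 7 4 4 6 4 isT isT isT isT ltac:(solveE) ltac:(solveE).
move: (rk _ lt g 8) R01 C0 C1 C2 C3 C4 C5 C6 C7 C8 C9 => r R01.
go.
Qed.


Lemma Hcol_8_10 : forall x y z s, In (x, y, z, s) (crossings knot_8_10) -> col_8_10 z = col_8_10 y *+ 2 - col_8_10 x.
Proof. solve_col. Qed.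

Lemma nbo_8_10_0 : ~ bi_orderable (@knot_quandle_op knot_8_10).
Proof.
move=> [lt [Hslo [HL HR]]].
pose g := fun i : nat => cls _ (crossings knot_8_10) (inord i : 'I_8).
have N01 : g 0 <> g 1.
{ apply: (@cls_neq _ _ _ col_8_10); [exact: Hcol_8_10 | colsimp; by apply/eqP; vm_compute]. }
have R01 := @rk_neq _ lt Hslo g 8 0 1 N01 isT isT.
have C0 := @S3_left _ _ lt Hslo HL g 8 1 3 5 0 2 isT isT isT isT ltac:(solveE) ltac:(solveE).
have C1 := @S3_right _ _ lt Hslo HR g 8 1 5 5 2 5 isT isT isT isT ltac:(solveE) ltac:(solveE).
have C2 := @S3_right _ _ lt Hslo HR g 8 3 0 0 2 0 isT isT isT isT ltac:(solveE) ltac:(solveE).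
have C3 := @S3_left _ _ lt Hslo HL g 8 3 0 3 2 3 isT isT isT isT ltac:(solveE) ltac:(solveE).
have C4 := @S3_left _ _ lt Hslo HL g 8 3 6 3 4 3 isT isT isT isT ltac:(solveE) ltac:(solveE).
have C5 := @S3_right _ _ lt Hslo HR g 8 3 6 6 4 6 isT isT isT isT ltac:(solveE) ltac:(solveE).
have C6 := @S3_left _ _ lt Hslo HL g 8 4 7 4 5 4 isT isT isT isT ltac:(solveE) ltac:(solveE).
have C7 := @S3_right _ _ lt Hslo HR g 8 4 7 7 5 7 isT isT isT isT ltac:(solveE) ltac:(solveE).
have C8 := @S3_left _ _ lt Hslo HL g 8 5 2 5 6 5 isT isT isT isT ltac:(solveE) ltac:(solveE).
have C9 := @S3_right _ _ lt Hslo HR g 8 6 4 4 7 4 isT isT isT isT ltac:(solveE) ltac:(solveE).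
have C10 := @S3_left _ _ lt Hslo HL g 8 6 4 6 7 6 isT isT isT isT ltac:(solveE) ltac:(solveE).
move: (rk _ lt g 8) R01 C0 C1 C2 C3 C4 C5 C6 C7 C8 C9 C10 => r R01.
go.
Qed.

Lemma nbo_8_10_1 : ~ bi_orderable (@knot_quandle_op (mirror knot_8_10)).
Proof.
move=> [lt [Hslo [HL HR]]].
pose g := fun i : nat => cls _ (crossings (mirror knot_8_10)) (inord i : 'I_8).
have N01 : g 0 <> g 1.
{ apply: (@cls_neq _ _ _ col_8_10); [apply: (@Hcol_mirror knot_8_10); exact: Hcol_8_10 | colsimp; by apply/eqP; vm_compute]. }
have R01 := @rk_neq _ lt Hslo g 8 0 1 N01 isT isT.
have C0 := @S3_right _ _ lt Hslo HR g 8 0 3 3 1 3 isT isT isT isT ltac:(solveE) ltac:(solveE).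
have C1 := @S3_right _ _ lt Hslo HR g 8 2 5 5 1 5 isT isT isT isT ltac:(solveE) ltac:(solveE).
have C2 := @S3_right _ _ lt Hslo HR g 8 2 0 0 3 0 isT isT isT isT ltac:(solveE) ltac:(solveE).
have C3 := @S3_left _ _ lt Hslo HL g 8 2 0 2 3 2 isT isT isT isT ltac:(solveE) ltac:(solveE).
have C4 := @S3_left _ _ lt Hslo HL g 8 4 6 4 3 4 isT isT isT isT ltac:(solveE) ltac:(solveE).
have C5 := @S3_left _ _ lt Hslo HL g 8 5 7 5 4 5 isT isT isT isT ltac:(solveE) ltac:(solveE).
have C6 := @S3_right _ _ lt Hslo HR g 8 5 7 7 4 7 isT isT isT isT ltac:(solveE) ltac:(solveE).
have C7 := @S3_right _ _ lt Hslo HR g 8 6 2 2 5 2 isT isT isT isT ltac:(solveE) ltac:(solveE).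
have C8 := @S3_left _ _ lt Hslo HL g 8 6 2 6 5 6 isT isT isT isT ltac:(solveE) ltac:(solveE).
have C9 := @S3_right _ _ lt Hslo HR g 8 7 4 4 6 4 isT isT isT isT ltac:(solveE) ltac:(solveE).
move: (rk _ lt g 8) R01 C0 C1 C2 C3 C4 C5 C6 C7 C8 C9 => r R01.
go.
Qed.


Lemma Hcol_8_16 : forall x y z s, In (x, y, z, s) (crossings knot_8_16) -> col_8_16 z = col_8_16 y *+ 2 - col_8_16 x.
Proof. solve_col. Qed.

Lemma nbo_8_16_0 : ~ bi_orderable (@knot_quandle_op knot_8_16).
Proof.
move=> [lt [Hslo [HL HR]]].
pose g := fun i : nat => cls _ (crossings knot_8_16) (inord i : 'I_8).
have N01 : g 0 <> g 1.
{ apply: (@cls_neq _ _ _ col_8_16); [exact: Hcol_8_16 | colsimp; by apply/eqP; vm_compute]. }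
have R01 := @rk_neq _ lt Hslo g 8 0 1 N01 isT isT.
have C0 := @S3_left _ _ lt Hslo HL g 8 0 3 0 1 0 isT isT isT isT ltac:(solveE) ltac:(solveE).
have C1 := @S3_right _ _ lt Hslo HR g 8 0 3 3 1 3 isT isT isT isT ltac:(solveE) ltac:(solveE).
have C2 := @S3_left _ _ lt Hslo HL g 8 2 6 5 1 3 isT isT isT isT ltac:(solveE) ltac:(solveE).
have C3 := @S3_right _ _ lt Hslo HR g 8 2 5 5 3 5 isT isT isT isT ltac:(solveE) ltac:(solveE).
have C4 := @S3_right _ _ lt Hslo HR g 8 3 1 1 4 1 isT isT isT isT ltac:(solveE) ltac:(solveE).
have C5 := @S3_right _ _ lt Hslo HR g 8 4 7 7 5 7 isT isT isT isT ltac:(solveE) ltac:(solveE).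
have C6 := @S3_left _ _ lt Hslo HL g 8 6 0 4 5 7 isT isT isT isT ltac:(solveE) ltac:(solveE).
have C7 := @S3_right _ _ lt Hslo HR g 8 6 4 4 7 4 isT isT isT isT ltac:(solveE) ltac:(solveE).
have C8 := @S3_left _ _ lt Hslo HL g 8 6 4 6 7 6 isT isT isT isT ltac:(solveE) ltac:(solveE).
move: (rk _ lt g 8) R01 C0 C1 C2 C3 C4 C5 C6 C7 C8 => r R01.
go.
Qed.

Lemma nbo_8_16_1 : ~ bi_orderable (@knot_quandle_op (mirror knot_8_16)).
Proof.
move=> [lt [Hslo [HL HR]]].
pose g := fun i : nat => cls _ (crossings (mirror knot_8_16)) (inord i : 'I_8).
have N01 : g 0 <> g 1.
{ apply: (@cls_neq _ _ _ col_8_16); [apply: (@Hcol_mirror knot_8_16); exact: Hcol_8_16 | colsimp; by apply/eqP; vm_compute]. }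
have R01 := @rk_neq _ lt Hslo g 8 0 1 N01 isT isT.
have C0 := @S3_right _ _ lt Hslo HR g 8 7 2 2 0 2 isT isT isT isT ltac:(solveE) ltac:(solveE).
have C1 := @S3_left _ _ lt Hslo HL g 8 7 2 7 0 7 isT isT isT isT ltac:(solveE) ltac:(solveE).
have C2 := @S3_right _ _ lt Hslo HR g 8 1 3 3 0 3 isT isT isT isT ltac:(solveE) ltac:(solveE).
have C3 := @S3_left _ _ lt Hslo HL g 8 3 5 3 2 3 isT isT isT isT ltac:(solveE) ltac:(solveE).
have C4 := @S3_right _ _ lt Hslo HR g 8 4 1 1 3 1 isT isT isT isT ltac:(solveE) ltac:(solveE).
have C5 := @S3_left _ _ lt Hslo HL g 8 4 1 4 3 4 isT isT isT isT ltac:(solveE) ltac:(solveE).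
have C6 := @S3_left _ _ lt Hslo HL g 8 5 7 0 4 6 isT isT isT isT ltac:(solveE) ltac:(solveE).
have C7 := @S3_left _ _ lt Hslo HL g 8 5 7 5 4 5 isT isT isT isT ltac:(solveE) ltac:(solveE).
have C8 := @S3_right _ _ lt Hslo HR g 8 5 0 0 6 0 isT isT isT isT ltac:(solveE) ltac:(solveE).
have C9 := @S3_left _ _ lt Hslo HL g 8 5 0 5 6 5 isT isT isT isT ltac:(solveE) ltac:(solveE).
have C10 := @S3_right _ _ lt Hslo HR g 8 7 4 4 6 4 isT isT isT isT ltac:(solveE) ltac:(solveE).
have C11 := @S3_left _ _ lt Hslo HL g 8 7 4 7 6 7 isT isT isT isT ltac:(solveE) ltac:(solveE).
move: (rk _ lt g 8) R01 C0 C1 C2 C3 C4 C5 C6 C7 C8 C9 C10 C11 => r R01.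
go.
Qed.

Theorem mainTheorem1 :
  forall D : diagram, In D the_knots ->
    ~ bi_orderable (@knot_quandle_op D) /\
    ~ bi_orderable (@knot_quandle_op (mirror D)).
Proof.
move=> D; rewrite /the_knots /=.
case=> [<-|[<-|[<-|[<-|[<-|[]]]]]].
- split; [exact: nbo_6_3_0 | exact: nbo_6_3_1].
- split; [exact: nbo_8_7_0 | exact: nbo_8_7_1].
- split; [exact: nbo_8_8_0 | exact: nbo_8_8_1].
- split; [exact: nbo_8_10_0 | exact: nbo_8_10_1].
- split; [exact: nbo_8_16_0 | exact: nbo_8_16_1].
Qed.
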